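(* Let $P$ be an online abstract network design problem. Consider an instance of $P$ on a tree metric $(T,d_T)$ with request sequence $Z_1,\ldots,Z_r$, and let $T_i=T[\mathcal Z_i]$ be the subtree of $T$ induced by $\mathcal Z_i=Z_1\cup\cdots\cup Z_i$. Then for any feasible solution $\mathcal S=((R_1,C_1),\ldots,(R_r,C_r))$ there exists a feasible solution $\mathcal S'=((R'_1,C_1),\ldots,(R'_r,C_r))$ such that each $R'_i$ is contained in $T_i$ and $\mathrm{cost}(\mathcal S')\le\mathrm{cost}(\mathcal S)$.
   Context: Abstract network design: an instance consists of a graph (here the edge-weighted tree $T$ with lengths $d_T$) and online requests $Z_i$ of terminals; a solution is a sequence of responses $(R_i,C_i)$ with $R_i$ a set of edges and $C_i$ an ordered list of pairs from $\binom{\mathcal Z_i}{2}$. Given feasibility functions $\mathcal F_i$, the solution is feasible iff for each $i$, $\mathcal F_i(C_1,\ldots,C_i)=1$ and each pair of $C_j$ is connected in $R_j$ for all $j\le i$. Load function $\rho$ on subsets of time steps is subadditive, monotone increasing, and zero exactly on $\emptyset$; the cost is $\sum_{e}d_T(e)\rho(\{j: e\in R_j\})$. $T[\mathcal Z_i]$ is the minimal subtree of $T$ containing $\mathcal Z_i$. *)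

(* Defs.v *)
From mathcomp Require Import all_boot all_order all_algebra.
Set Implicit Arguments. Unset Strict Implicit. Unset Printing Implicit Defensive.
Import Order.TTheory GRing.Theory Num.Theory.
Local Open Scope ring_scope.

Section Defs.
Variable V : finType.

Definition edge_set_ok (E : {set {set V}}) : Prop :=
  forall e, e \in E -> #|e| = 2%N.

Definition connected_in (F : {set {set V}}) (u v : V) : bool :=
  connect (fun x y => [set x; y] \in F) u v.

Definition is_cycle (E : {set {set V}}) (v0 : V) (p : seq V) : bool :=
  [&& (2 <= size p)%N, uniq (v0 :: p),
      path (fun x y => [set x; y] \in E) v0 p &
      [set last v0 p; v0] \in E].

Definition is_tree (E : {set {set V}}) : Prop :=
  [/\ edge_set_ok E,
      (forall u v, connected_in E u v) &
      (forall v0 p, ~~ is_cycle E v0 p)].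

Definition subtree_containing (E : {set {set V}}) (Z : {set V})
    (F : {set {set V}}) : bool :=
  (F \subset E) &&
  [forall u in Z :|: \bigcup_(e in F) e,
     forall v in Z :|: \bigcup_(e in F) e, connected_in F u v].

(* edge set of T[Z], the minimal subtree of T containing Z
   (intersection of all subtrees containing Z) *)
Definition span_edges (E : {set {set V}}) (Z : {set V}) : {set {set V}} :=
  \bigcap_(F | subtree_containing E Z F) F.

End Defs.

Section Problem.
Variables (V : finType) (r : nat).

Definition cumZ (Z : 'I_r -> {set V}) (i : 'I_r) : {set V} :=
  \bigcup_(j : 'I_r | (j <= i)%N) Z j.

Definition prefixC (C : 'I_r -> seq (V * V)) (i : 'I_r) : seq (seq (V * V)) :=
  map C (take i.+1 (enum 'I_r)).

Definition feasible (E : {set {set V}}) (Z : 'I_r -> {set V})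
    (Feas : 'I_r -> seq (seq (V * V)) -> bool)
    (R : 'I_r -> {set {set V}}) (C : 'I_r -> seq (V * V)) : Prop :=
  (forall i, R i \subset E) /\
  (forall i p, p \in C i -> [/\ p.1 \in cumZ Z i, p.2 \in cumZ Z i & p.1 != p.2]) /\
  (forall i : 'I_r, Feas i (prefixC C i) /\
     forall j : 'I_r, (j <= i)%N -> forall p, p \in C j -> connected_in (R j) p.1 p.2).

Definition load_function (R : numDomainType) (rho : {set 'I_r} -> R) : Prop :=
  [/\ (forall A B, rho (A :|: B) <= rho A + rho B),
      (forall A B : {set 'I_r}, A \subset B -> rho A <= rho B) &
      (forall A, rho A = 0 <-> A = set0)].

Definition cost (R : numDomainType) (E : {set {set V}}) (d : {set V} -> R)
    (rho : {set 'I_r} -> R) (Rs : 'I_r -> {set {set V}}) : R :=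
  \sum_(e in E) d e * rho [set j | e \in Rs j].

End Problem.

(* Main.v *)
Require Import Defs.
From mathcomp Require Import all_boot all_order all_algebra.
Import Order.TTheory GRing.Theory Num.Theory.
Local Open Scope ring_scope.

Section Helpers.
Variable V : finType.
Implicit Types (E F R : {set {set V}}).

Definition adj F : rel V := fun x y => [set x; y] \in F.


Lemma adj_sym F : symmetric (adj F).
Proof. by move=> x y; rewrite /adj setUC. Qed.

Lemma conn_sym F x y : connected_in F x y = connected_in F y x.
Proof. by rewrite /connected_in (sym_connect_sym (adj_sym F)). Qed.

Lemma conn_sub F F' x y : F \subset F' -> connected_in F x y -> connected_in F' x y.
Proof.
move=> sFF'; apply: connect_sub => a b hab; apply: connect1.
by move: hab; rewrite /adj => /(subsetP sFF').
Qed.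

Lemma cut E a b : is_tree E -> [set a; b] \in E ->
  ~~ connected_in (E :\ [set a; b]) a b.
Proof.
case=> ok _ acyc hab; apply/negP => /connectP [p pp lp].
move: hab lp; case: (shortenP pp) => p' pp' up' _ hab lp {pp}.
have ab : a != b.
  apply/eqP => eab; move: (ok _ hab); rewrite eab setUid cards1 => //.
move: lp; case: p' pp' up' => [|x [|y q]] /=.
- by move=> _ _ ba; rewrite ba eqxx in ab.
- move=> /andP [h _] _ xb; move: h; rewrite -xb /= !inE eqxx.
  done.
- move=> /andP [h1 /andP [h2 h3]] hu lb.
  move/negP: (acyc a [:: x, y & q]); apply; rewrite /is_cycle /= hu /=.
  have sub : subrel (fun x0 y0 => [set x0; y0] \in E :\ [set a; b])
                    (fun x0 y0 => [set x0; y0] \in E).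
    by move=> u v; rewrite !inE => /andP [].
  move: h1 h2; rewrite !inE => /andP [_ ->] /andP [_ ->] /=.
  rewrite (sub_path sub h3) /=.
  by rewrite -lb setUC hab.
Qed.

Lemma path_avoid E (e : {set V}) u x p : u \in e -> u \notin x :: p ->
  path (adj E) x p -> path (adj (E :\ e)) x p.
Proof.
move=> ue; elim: p x => [|y p IH] x //= hn /andP [hxy hp].
rewrite inE negb_or in hn; case/andP: hn => hux hn.
rewrite IH // andbT /adj !inE; move: hxy; rewrite /adj => -> ; rewrite andbT.
apply/eqP => eq; move: ue; rewrite -eq !inE.
rewrite (negbTE hux); move: hn; rewrite inE negb_or => /andP [/negbTE -> _].
done.
Qed.

Lemma key E F u x p : is_tree E -> F \subset E ->
  uniq (u :: x :: p) -> path (adj E) x p -> [set u; x] \in E ->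
  connected_in F u (last x p) -> [set u; x] \in F.
Proof.
move=> tE sFE hu hp hux hc; apply/negPn/negP => nF.
have sF : F \subset E :\ [set u; x].
  apply/subsetP => f fF; rewrite !inE (subsetP sFE) // andbT.
  by apply/eqP => ef; rewrite -ef fF in nF.
have c1 := conn_sub _ _ _ _ sF hc.
have c2 : connected_in (E :\ [set u; x]) x (last x p).
  apply/connectP; exists p => //.
  apply: (path_avoid E [set u; x] u x p); first by rewrite !inE eqxx.
    by move: hu => /= /andP [].
  exact: hp.
have := cut _ _ _ tE hux; rewrite conn_sym in c2.
by rewrite /connected_in (connect_trans c1 c2).
Qed.

Lemma main E F p u : is_tree E -> F \subset E ->
  uniq (u :: p) -> path (adj E) u p -> connected_in F u (last u p) ->
  path (adj F) u p.
Proof.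
move=> tE sFE; elim: p u => [|x p IH] u //= hu /andP [hux hp] hc.
have hF : [set u; x] \in F by apply: (key _ _ _ _ _ tE sFE hu hp hux hc).
rewrite /adj hF /=; apply: IH => //.
  by case/andP: hu.
rewrite /connected_in (connect_trans _ hc) //.
by apply: connect1; rewrite /adj setUC.
Qed.

End Helpers.
Arguments adj {V}.

Theorem proposition3p3 (R : realFieldType) (V : finType) (E : {set {set V}})
  (d : {set V} -> R) (r : nat) (Z : 'I_r -> {set V})
  (Feas : 'I_r -> seq (seq (V * V)) -> bool) (rho : {set 'I_r} -> R)
  (Rs : 'I_r -> {set {set V}}) (C : 'I_r -> seq (V * V)) :
  is_tree E ->
  (forall e, e \in E -> 0 < d e) ->
  load_function rho ->
  feasible E Z Feas Rs C ->
  exists Rs' : 'I_r -> {set {set V}},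
    [/\ feasible E Z Feas Rs' C,
        (forall i, Rs' i \subset span_edges E (cumZ Z i)) &
        cost E d rho Rs' <= cost E d rho Rs].
Proof.
move=> tE dpos [_ rmono _] [sRE [hC hF]].
exists (fun i => Rs i :&: span_edges E (cumZ Z i)); split.
- split; first by move=> i; exact: subset_trans (subsetIl _ _) (sRE i).
  split=> // i; case: (hF i) => hFi hcon; split=> // j ji q qC.
  have [q1 q2 _] := hC j q qC.
  have := hcon j ji q qC => /connectP [p pp lp].
  rewrite lp; move: q2; rewrite lp; case: (shortenP pp) => p' pp' up' _ q2.
  apply/connectP; exists p' => //.
  have pE : path (adj E) q.1 p'.
    apply: sub_path pp' => a b; rewrite /adj; exact: (subsetP (sRE j)).
  have allF : forall F, @subtree_containing V E (cumZ Z j) F -> path (adj F) q.1 p'.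
    move=> F /andP [sFE /forallP hall].
    apply: (main _ _ _ _ _ tE sFE up' pE).
    have := hall q.1; rewrite inE q1 /= => /forallP /(_ (last q.1 p')).
    by rewrite inE q2 /=.
  apply/(pathP q.1) => k hk; rewrite inE.
  move/(pathP q.1): pp' => /(_ k hk) -> /=.
  apply/bigcapP => F hF'.
  by move/(pathP q.1): (allF F hF') => /(_ k hk).
- by move=> i; exact: subsetIr.
- rewrite /cost; apply: ler_sum => e eE.
  apply: ler_wpM2l; first exact: ltW (dpos e eE).
  apply: rmono; apply/subsetP => j; rewrite !inE => /andP [] //.
Qed.
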